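(* Let $p$ be an odd prime. Then, modulo $[p]^2$, $$\sum_{k=0}^{\frac{p-1}{2}} \begin{bmatrix}2k\\k\end{bmatrix}_{q^2}^3 \frac{q^{2k}}{(-q^2;q^2)_k^2\,(-q;q)_{2k}^2} \equiv \begin{cases} q^{\frac{p-1}{2}} \begin{bmatrix}\frac{p-1}{2}\\ \frac{p-1}{4}\end{bmatrix}_{q^4}^2 \dfrac{1}{(-q^2;q^2)_{\frac{p-1}{2}}^2}, & \text{if } p\equiv 1\pmod 4,\\[2mm] 0, & \text{otherwise.}\end{cases}$$
   Context: For an indeterminate $q$ and an integer $n\ge 0$: $(a;q)_0=1$ and $(a;q)_n=(1-a)(1-aq)\cdots(1-aq^{n-1})$. The $q$-binomial coefficient is $\begin{bmatrix}n\\k\end{bmatrix}_q=\frac{(q^{n-k+1};q)_k}{(q;q)_k}$ if $0\le k\le n$ and $0$ otherwise; if no base is indicated, the base is $q$. For a positive integer $p$, $[p]=\frac{1-q^p}{1-q}=1+q+\cdots+q^{p-1}$. For a prime $p$, $[p]$ is irreducible in $\mathbb{Q}[q]$; for rational functions $A,B$ of $q$ whose denominators are coprime to $[p]$, $A\equiv B\pmod{[p]^r}$ means that $A-B$, written in lowest terms, has numerator divisible by $[p]^r$ in $\mathbb{Q}[q]$. *)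

(* Defs.v *)
From HB Require Import structures.
From mathcomp Require Import all_boot all_order all_algebra.
Set Implicit Arguments. Unset Strict Implicit. Unset Printing Implicit Defensive.
Import Order.TTheory GRing.Theory Num.Theory.
Local Open Scope ring_scope.

Notation QF := {fraction {poly rat}}.

Definition qq : QF := tofrac ('X : {poly rat}).

Definition qpoch (a x : QF) (n : nat) : QF := \prod_(i < n) (1 - a * x ^+ i).

Definition qbin (x : QF) (n k : nat) : QF :=
  if (k <= n)%N then qpoch (x ^+ (n - k + 1)) x k / qpoch x x k else 0.

Definition qint (p : nat) : {poly rat} := \sum_(i < p) 'X^i.

(* A == B mod m^r for rational functions: A - B = N/D with m^r | N and D
   coprime to m (so denominators coprime to m; lowest-terms numerator
   divisible by m^r when m is irreducible). *)
Definition qcongr (m : {poly rat}) (r : nat) (A B : QF) : Prop :=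
  exists N D : {poly rat}, [/\ D != 0, coprimep D m, (m ^+ r %| N)%R &
    A - B = tofrac N / tofrac D].

(* Main.v *)
Require Import Defs.
From HB Require Import structures.
From mathcomp Require Import all_boot all_order all_algebra.
From mathcomp Require Import ring zify.
Set Implicit Arguments. Unset Strict Implicit. Unset Printing Implicit Defensive.
Import Order.TTheory GRing.Theory Num.Theory.
Local Open Scope ring_scope.


Definition tt (F : fieldType) (Q x y : F) :=
  Q*(x-y)*(1-Q*x*y)*(1-Q*y^+2) / (x*(1-Q*y)^+2*(1-Q^+2*y^+2)).
Definition FF (F : fieldType) (Q : F) n k := \prod_(i<k) tt Q (Q^+n) (Q^+i).
Definition TT (F : fieldType) (Q : F) n := \sum_(k < n.+1) FF Q n k.
Definition SS (F : fieldType) (Q x y : F) :=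
  Q^+2*x*(Q^+3*x^+2-1)*(1-y)^+3*(1+y)/(y*(y-Q*x)*(y-Q^+2*x)).

Section A.
Variable F : fieldType.
Variable Q : F.
Hypothesis hQ : forall a b : nat, a != b -> Q^+a != Q^+b.

Lemma nzQ a b : a != b -> Q^+a - Q^+b != 0.
Proof. by move=> h; rewrite subr_eq0 hQ. Qed.

Lemma Q0 : Q != 0.
Proof. apply/eqP=> h; have := hQ (a:=1) (b:=2) isT; by rewrite h expr2 !mul0r expr1 eqxx. Qed.

Lemma Xn0 n : Q^+n != 0.
Proof. by rewrite expf_neq0 // Q0. Qed.

Lemma lin0 (c a b : F) : a = b -> (a - b) * c = 0.
Proof. by move=> ->; rewrite subrr mul0r. Qed.

Lemma rho n k : FF Q (n.+2) k * ((Q^+2*Q^+n - Q^+k)*(Q*Q^+n-Q^+k)*(1-Q*Q^+n)*(1-Q^+2*Q^+n))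
  = FF Q n k * ((Q^+2*Q^+n-1)*(Q*Q^+n-1)*(1-Q*Q^+n*Q^+k)*(1-Q^+2*Q^+n*Q^+k)).
Proof.
elim: k => [|k IH].
  rewrite /FF !big_ord0 !mul1r expr0; ring.
rewrite /FF !big_ord_recr /= -/(FF Q n.+2 k) -/(FF Q n k).
have e2 : Q^+n.+2 = Q^+2 * Q^+n by rewrite -exprD.
rewrite e2 (exprS Q k).
have h1 : 1 - Q * Q^+k != 0 by have := nzQ (a:=0) (b:=k.+1) isT; rewrite expr0 exprS.
have h2 : 1 - Q^+2 * Q^+k^+2 != 0.
  have := nzQ (a:=0) (b:=k.+1 * 2) ltac:(lia); by rewrite expr0 exprM exprS exprMn.
have hx := Xn0 n. have hy := Xn0 k. have hQ0 := Q0.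
move: IH h1 h2 hx hy; set x := Q^+n; set y := Q^+k; set A := FF Q n.+2 k; set B := FF Q n k.
move=> IH h1 h2 hx hy.
rewrite /tt; apply/eqP; rewrite -subr_eq0; apply/eqP.
apply: (eq_trans _ (lin0 (Q*(1-Q^+3*x*y)*(1-Q*y^+2)*(x-y)/(x*(1-Q*y)^+2*(1-Q^+2*y^+2))) IH)).
field. by rewrite exprMn h1 h2 hx hQ0.
Qed.

Ltac nzt := first [apply: nzQ; lia | rewrite -[1](expr0 Q); apply: nzQ; lia].

Definition GG n k := FF Q n k * SS Q (Q^+n) (Q^+k).

Lemma FFS n k : FF Q n k.+1 = FF Q n k * tt Q (Q^+n) (Q^+k).
Proof. by rewrite /FF big_ord_recr. Qed.

Lemma rho' n k : (k < n)%N \/ k = n ->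
  FF Q (n.+2) k = FF Q n k * ((Q^+2*Q^+n-1)*(Q*Q^+n-1)*(1-Q*Q^+n*Q^+k)*(1-Q^+2*Q^+n*Q^+k))
     / ((Q^+2*Q^+n - Q^+k)*(Q*Q^+n-Q^+k)*(1-Q*Q^+n)*(1-Q^+2*Q^+n)).
Proof.
move=> hk.
have hD : (Q^+2*Q^+n - Q^+k)*(Q*Q^+n-Q^+k)*(1-Q*Q^+n)*(1-Q^+2*Q^+n) != 0.
  rewrite -!exprS -exprD.
  by rewrite !mulf_neq0 //; nzt.
apply: (canRL (mulfK hD)); exact: rho.
Qed.


Lemma step n k : (k < n)%N ->
  (1-Q^+2*Q^+n)^+2 * FF Q n.+2 k - Q*(1-Q*Q^+n)^+2 * FF Q n k = GG n k.+1 - GG n k.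
Proof.
move=> hk; rewrite /GG FFS rho'; last by left.
rewrite (exprS Q k).
have hQ0 := Q0.
have h1 : Q ^+ 2 * Q ^+ n - Q ^+ k != 0 by rewrite -exprD; nzt.
have h2 : Q * Q ^+ n - Q ^+ k != 0 by rewrite -exprS; nzt.
have h3 : 1 - Q * Q ^+ n != 0 by rewrite -exprS; nzt.
have h4 : 1 - Q^+2 * Q ^+ n != 0 by rewrite -exprD; nzt.
have h5 : Q^+k - Q * Q ^+ n != 0 by rewrite -exprS; nzt.
have h6 : Q^+k - Q^+2 * Q ^+ n != 0 by rewrite -exprD; nzt.
have h7 : Q * Q^+k - Q * Q ^+ n != 0 by rewrite -!exprS; nzt.
have h8 : Q * Q^+k - Q^+2 * Q ^+ n != 0 by rewrite -exprS -exprD; nzt.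
have h9 : 1 - Q * Q^+k != 0 by rewrite -exprS; nzt.
have h10 : 1 - (Q * Q^+k)^+2 != 0 by rewrite -exprS -exprM; nzt.
have hx := Xn0 n. have hy := Xn0 k.
move: h1 h2 h3 h4 h5 h6 h7 h8 h9 h10 hx hy.
set x := Q^+n; set y := Q^+k; set B := FF Q n k.
move=> h1 h2 h3 h4 h5 h6 h7 h8 h9 h10 hx hy.
rewrite /tt /SS. field.
by rewrite h1 h2 h3 h4 h5 h6 h7 h8 h9 h10 hx hy hQ0.
Qed.


Lemma bdry n :
  (1-Q^+2*Q^+n)^+2 * (FF Q n.+2 n + FF Q n.+2 n.+1 + FF Q n.+2 n.+2)
   - Q*(1-Q*Q^+n)^+2 * FF Q n n + GG n n = 0.
Proof.
rewrite /GG !FFS rho'; last by right.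
have e1 : Q^+n.+1 = Q * Q^+n by rewrite exprS.
have e2 : Q^+n.+2 = Q^+2 * Q^+n by rewrite -exprD.
rewrite e1 e2.
have hQ0 := Q0.
have h1 : Q ^+ 2 * Q ^+ n - Q ^+ n != 0 by rewrite -exprD; nzt.
have h2 : Q * Q ^+ n - Q ^+ n != 0 by rewrite -exprS; nzt.
have h3 : 1 - Q * Q ^+ n != 0 by rewrite -exprS; nzt.
have h4 : 1 - Q^+2 * Q ^+ n != 0 by rewrite -exprD; nzt.
have h5 : Q^+n - Q * Q ^+ n != 0 by rewrite -exprS; nzt.
have h6 : Q^+n - Q^+2 * Q ^+ n != 0 by rewrite -exprD; nzt.
have h10 : 1 - (Q * Q^+n)^+2 != 0 by rewrite -exprS -exprM; nzt.
have h11 : 1 - (Q^+2 * Q^+n)^+2 != 0 by rewrite -exprD -exprM; nzt.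
have h12 : 1 - Q^+3 * Q^+n != 0 by rewrite -exprD; nzt.
have hx := Xn0 n.
move: h1 h2 h3 h4 h5 h6 h10 h11 h12 hx.
set x := Q^+n; set B := FF Q n n.
move=> h1 h2 h3 h4 h5 h6 h10 h11 h12 hx.
rewrite /tt /SS. field.
rewrite !mulrA -expr2.
by rewrite h1 h2 h3 h4 h5 h6 h10 h11 hx hQ0.
Qed.


Lemma sum0 (a b c : F) : a = b -> c = 0 -> (a - b) + c = 0.
Proof. by move=> -> ->; rewrite subrr addr0. Qed.

Lemma recT n : (1-Q^+2*Q^+n)^+2 * TT Q n.+2 = Q*(1-Q*Q^+n)^+2 * TT Q n.
Proof.
have tel : forall m, (m <= n)%N -> \sum_(k < m)
   ((1-Q^+2*Q^+n)^+2 * FF Q n.+2 k - Q*(1-Q*Q^+n)^+2 * FF Q n k) = GG n m.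
  elim => [|m IH] hm.
    by rewrite big_ord0 /GG /SS expr0 subrr expr0n /= !(mulr0, mul0r).
  rewrite big_ord_recr /= IH ?(ltnW hm) // step //.
  by rewrite addrC subrK.
have := tel n (leqnn n); rewrite sumrB -!mulr_sumr => hT.
have hb := bdry n.
rewrite /TT big_ord_recr /= big_ord_recr /= big_ord_recr /= big_ord_recr /=.
apply/eqP; rewrite -subr_eq0; apply/eqP.
apply: (eq_trans _ (sum0 hT hb)).
ring.
Qed.


Definition Tc m := Q^+m * (\prod_(i<m) ((1-Q^+(2 * i+1))/(1-Q^+(2 * i+2))))^+2.

Lemma TT_closed m : TT Q (2 * m) = Tc m /\ TT Q (2 * m).+1 = 0.
Proof.
elim: m => [|m [IH1 IH2]].
  split.
    by rewrite /TT /Tc big_ord_recr big_ord0 /= /FF !big_ord0 add0r expr0 mul1r expr1n.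
  rewrite /TT big_ord_recr big_ord_recr big_ord0 /= /FF big_ord_recr !big_ord0 /= !mul1r add0r.
  have h1 : 1 - Q != 0 by have := nzQ (a:=0) (b:=1) isT; rewrite expr0 expr1.
  have h2 : 1 - Q^+2 != 0 by have := nzQ (a:=0) (b:=2) isT; rewrite expr0.
  have hQ0 := Q0.
  rewrite /tt !expr0 !expr1; field.
  by rewrite h1 h2 hQ0.
have hA : (1 - Q ^+ 2 * Q ^+ (2 * m)) ^+ 2 != 0.
  by rewrite expf_neq0 // -exprD; nzt.
have hA' : (1 - Q ^+ 2 * Q ^+ (2 * m).+1) ^+ 2 != 0.
  by rewrite expf_neq0 // -exprD; nzt.
split.
  have -> : (2 * m.+1 = (2 * m).+2)%N by lia.
  have := recT (2 * m) ; move/(canRL (mulKf hA)) => ->.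
  rewrite IH1 /Tc big_ord_recr /=.
  have -> : Q^+(2 * m+1) = Q * Q^+(2 * m) by rewrite addn1 exprS.
  have -> : Q^+(2 * m+2) = Q^+2 * Q^+(2 * m) by rewrite addnC exprD.
  have hA1 : 1 - Q^+2*Q^+(2 * m) != 0 by rewrite -exprD; nzt.
  move: hA1; set x := Q^+(2 * m); set P := \prod_(i < m) _ => hA1.
  rewrite (exprS Q m); field.
  by rewrite hA1.
have -> : ((2 * m.+1).+1 = (2 * m).+1.+2)%N by lia.
have := recT (2 * m).+1 ; move/(canRL (mulKf hA')) => ->.
by rewrite IH2 !mulr0.
Qed.

End A.


Lemma prod_step (R : comRingType) (a b c d : R) : a*c - b*d = c*(a - b) + b*(c - d).
Proof. ring. Qed.

Section B.
Variable m : {poly rat}.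
Variable r : nat.

Definition good (A : QF) := exists N D : {poly rat}, [/\ D != 0, coprimep D m & A = tofrac N / tofrac D].
Definition zero2 (A : QF) := exists N D : {poly rat}, [/\ D != 0, coprimep D m, (m ^+ r %| N)%R & A = tofrac N / tofrac D].

Lemma tofrac_neq0 (D : {poly rat}) : D != 0 -> tofrac D != 0 :> QF.
Proof. by rewrite tofrac_eq0. Qed.

Lemma good_poly N : good (tofrac N).
Proof. exists N, 1; split; [exact: oner_neq0 | exact: coprime1p | by rewrite tofrac1 divr1]. Qed.

Lemma good_inv D : D != 0 -> coprimep D m -> good (tofrac D)^-1.
Proof. move=> h1 h2; exists 1, D; split => //; by rewrite tofrac1 div1r. Qed.

Lemma good_mul A B : good A -> good B -> good (A * B).
Proof.
move=> [N1 [D1 [h1 c1 ->]]] [N2 [D2 [h2 c2 ->]]].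
exists (N1 * N2), (D1 * D2); split.
- by rewrite mulf_neq0.
- by rewrite coprimepMl c1 c2.
- have := tofrac_neq0 h1; have := tofrac_neq0 h2 => t2 t1.
  rewrite !tofracM; exact: mulf_div.
Qed.

Lemma good_add A B : good A -> good B -> good (A + B).
Proof.
move=> [N1 [D1 [h1 c1 ->]]] [N2 [D2 [h2 c2 ->]]].
exists (N1 * D2 + N2 * D1), (D1 * D2); split.
- by rewrite mulf_neq0.
- by rewrite coprimepMl c1 c2.
- have := tofrac_neq0 h1; have := tofrac_neq0 h2 => t2 t1.
  rewrite tofracD !tofracM; exact: (addf_div _ _ t1 t2).
Qed.

Lemma good_opp A : good A -> good (- A).
Proof.
move=> [N1 [D1 [h1 c1 ->]]]; exists (- N1), D1; split => //.
rewrite tofracN; exact: esym (mulNr _ _).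
Qed.

Lemma zero2_add A B : zero2 A -> zero2 B -> zero2 (A + B).
Proof.
move=> [N1 [D1 [h1 c1 d1 ->]]] [N2 [D2 [h2 c2 d2 ->]]].
exists (N1 * D2 + N2 * D1), (D1 * D2); split.
- by rewrite mulf_neq0.
- by rewrite coprimepMl c1 c2.
- by rewrite dvdp_add // dvdp_mulr.
- have := tofrac_neq0 h1; have := tofrac_neq0 h2 => t2 t1.
  rewrite tofracD !tofracM; exact: (addf_div _ _ t1 t2).
Qed.

Lemma zero2_mul A B : good A -> zero2 B -> zero2 (A * B).
Proof.
move=> [N1 [D1 [h1 c1 ->]]] [N2 [D2 [h2 c2 d2 ->]]].
exists (N1 * N2), (D1 * D2); split.
- by rewrite mulf_neq0.
- by rewrite coprimepMl c1 c2.
- by rewrite dvdp_mull.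
- have := tofrac_neq0 h1; have := tofrac_neq0 h2 => t2 t1.
  rewrite !tofracM; exact: mulf_div.
Qed.

Lemma zero2_poly N : (m ^+ r %| N)%R -> zero2 (tofrac N).
Proof. move=> h; exists N, 1; split; [exact: oner_neq0 | exact: coprime1p | done | by rewrite tofrac1 divr1]. Qed.

Lemma zero2_0 : zero2 0.
Proof. by rewrite -tofrac0; apply: zero2_poly; rewrite dvdp0. Qed.

Lemma good_prod k (f : nat -> QF) : (forall i, (i < k)%N -> good (f i)) -> good (\prod_(i < k) f i).
Proof.
elim: k => [|k IH] h; first by rewrite big_ord0 -tofrac1; apply: good_poly.
rewrite big_ord_recr /=; apply: good_mul; last exact: h.
by apply: IH => i hi; apply: h; lia.
Qed.

Lemma zero2_sum k (f : nat -> QF) : (forall i, (i < k)%N -> zero2 (f i)) -> zero2 (\sum_(i < k) f i).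
Proof.
elim: k => [|k IH] h; first by rewrite big_ord0; apply: zero2_0.
rewrite big_ord_recr /=; apply: zero2_add; last exact: h.
by apply: IH => i hi; apply: h; lia.
Qed.

Lemma zero2_prod k (f g : nat -> QF) :
  (forall i, (i < k)%N -> [/\ good (f i), good (g i) & zero2 (f i - g i)]) ->
  zero2 (\prod_(i < k) f i - \prod_(i < k) g i).
Proof.
elim: k => [|k IH] h; first by rewrite !big_ord0 subrr; apply: zero2_0.
have IH' : zero2 (\prod_(i < k) f i - \prod_(i < k) g i).
  by apply: IH => i hi; apply: h; lia.
have [gf gg z] := h k (ltnSn k).
rewrite !big_ord_recr /=.
rewrite (prod_step (\prod_(i < k) f i)).
apply: zero2_add; apply: zero2_mul => //.
by apply: good_prod => i hi; have [] := h i (ltn_trans hi (ltnSn k)).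
Qed.

End B.


Lemma comb (R: comRingType) (X qp P h Xj Xaj Xvp s1 s2 : R) :
 qp - P = h*(X-1) -> Xaj - 1 = (Xj - 1)*s2 -> Xvp - 1 = (X-1)*qp*s1 -> X*Xaj = Xvp ->
 (-(h*X*s2))*(1 - Xj) + (1 - h*(X-1)*s1)*qp = P.
Proof.
move=> e1 e2 e3 e4.
have: (-(h*X*s2))*(1 - Xj) + (1 - h*(X-1)*s1)*qp - P =
  (qp - P - h*(X-1)) - h*X*(Xaj - 1 - (Xj - 1)*s2) + h*(Xvp - 1 - (X-1)*qp*s1) + h*(X*Xaj - Xvp) by ring.
rewrite e1 e2 e3 e4 !subrr !mulr0 subr0 !addr0.
by move/eqP; rewrite subr_eq0 => /eqP.
Qed.

Lemma coprime_comb (a b u v : {poly rat}) (c : rat) : c != 0 -> u*a + v*b = c%:P -> coprimep a b.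
Proof.
move=> hc e; apply/Bezout_eq1_coprimepP.
exists ((c^-1)%:P * u, (c^-1)%:P * v) => /=.
by rewrite -!mulrA -mulrDr e -polyCM mulVf.
Qed.

Lemma qint_horner p (x : rat) : (qint p).[x] = \sum_(i < p) x ^+ i.
Proof. by rewrite /qint horner_sum; apply: eq_bigr => i _; rewrite hornerXn. Qed.

Lemma qint_X1 p : 'X^p - 1 = ('X - 1) * qint p.
Proof. by rewrite subrX1. Qed.

Lemma cop_X p : (0 < p)%N -> coprimep 'X (qint p).
Proof.
move=> hp; rewrite coprimep_sym.
have -> : ('X : {poly rat}) = 'X - 0%:P by rewrite subr0.
rewrite coprimep_XsubC /root qint_horner.
case: p hp => // p _; rewrite big_ord_recl expr0 big1 ?addr0 ?oner_neq0 // => i _.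
by rewrite exprS mul0r.
Qed.

Lemma cop_1mX p j : prime p -> ~~ (p %| j)%N -> coprimep (1 - 'X^j) (qint p).
Proof.
move=> pp hj.
have p0 : (0 < p)%N by exact: prime_gt0.
have [a _ hd] := Bezoutl j p0.
have cpj : coprime p j by rewrite prime_coprime.
move: hd; rewrite (eqP cpj) => hd.
set v := ((1 + a * j) %/ p)%N.
have hv : (1 + a * j = v * p)%N by rewrite divnK.
have [h e1] : exists h, qint p - (p%:R)%:P = h * ('X - 1).
  apply/dvdpP; rewrite -polyC1 dvdp_XsubCl /root hornerD hornerN hornerC qint_horner.
  by rewrite (eq_bigr (fun _ => 1)) ?sumr_const ?card_ord ?subrr // => i _; rewrite expr1n.
have e2 : 'X^(j*a)%N - 1 = ('X^j - 1) * \sum_(i < a) ('X^j)^+i :> {poly rat} by rewrite exprM subrX1.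
have e3 : 'X^(p*v)%N - 1 = ('X - 1) * qint p * \sum_(i < v) ('X^p)^+i :> {poly rat} by rewrite exprM subrX1 qint_X1.
have e4 : 'X * 'X^(j*a)%N = 'X^(p*v)%N :> {poly rat}.
  by rewrite -exprS; congr (_ ^+ _); lia.
apply: (@coprime_comb _ _ _ _ (p%:R)); first by rewrite pnatr_eq0 -lt0n.
rewrite -[X in _ = X]/((p%:R : rat)%:P).
exact: (comb e1 e2 e3 e4).
Qed.


Definition U (F : fieldType) (q z : F) :=
  (1-q*z^+2)^+2 * (1-q^+2*z^+4) * q^+2 * ((1-q^+2*z^+2)^-1)^+2 * (1-q^+4*z^+4)^-1.

Lemma stepL (F : fieldType) (q a b c d z : F) : b != 0 -> c != 0 -> d != 0 ->
  1 - q^+2*z^+2 != 0 -> 1 - q^+4*z^+4 != 0 -> 1 + q^+2*z^+2 != 0 -> 1 + q*z^+2 != 0 ->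
 (a * (1 - q^+2 * z^+4) * (1 - q^+2 * (q^+2 * z^+4)) / (b * (1 - q^+2 * z^+2))^+2)^+3 * (q^+2 * z^+2) /
   ((c * (1 - - q^+2 * z^+2))^+2 * (d * (1 - - q * z^+2) * (1 - - q * (q * z^+2)))^+2)
 = (a / b^+2)^+3 * z^+2 / (c^+2 * d^+2) * U q z.
Proof.
move=> hb hc hd h1 h2 h3 h4; rewrite /U; field.
by rewrite !exprMn hb hc hd h1 h2 /= !mulNr !opprK mulrA -expr2 h3 h4.
Qed.

Lemma stepR (F : fieldType) (q a b c z : F) : b != 0 -> c != 0 ->
  1 - q^+4*z^+4 != 0 -> 1 + q^+2*z^+4 != 0 -> 1 + q^+4*z^+4 != 0 ->
  a * (1 - q^+4 * z^+8) * (1 - q^+4 * (q^+4 * z^+8)) / (b * (1 - q^+4 * z^+4))^+2 /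
   (c * (1 - - q^+2 * z^+4) * (1 - - q^+2 * (q^+2 * z^+4)))
  = a / b^+2 / c * ((1 - q^+2 * z^+4) / (1 - q^+4 * z^+4)).
Proof.
move=> hb hc h1 h2 h3; field.
by rewrite !exprMn hb hc h1 /= !mulNr !opprK mulrA -exprD h2 h3.
Qed.

Lemma base1 (F : fieldType) : 1 / 1 / 1 = 1 :> F.
Proof. by rewrite !divr1. Qed.

Lemma ttE (F : fieldType) (q w z : F) : q != 0 -> w != 0 -> 1 - q^+2*z^+2 != 0 -> 1 - q^+4*z^+4 != 0 ->
  tt (q^+2) (w^+2) (z^+2) = q^+2 * (w^+2 - z^+2) * (1 - q^+2 * w^+2 * z^+2) * (1 - q^+2 * z^+4)
    * (w^-1)^+2 * ((1 - q^+2*z^+2)^-1)^+2 * (1 - q^+4*z^+4)^-1.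
Proof.
move=> hq hw h1 h2; rewrite /tt; field.
by rewrite !exprMn h1 h2 hw ?hq.
Qed.

Lemma diffE (F : fieldType) (q w z : F) : q != 0 -> w != 0 -> 1 - q^+2*z^+2 != 0 -> 1 - q^+4*z^+4 != 0 ->
  U q z - tt (q^+2) (w^+2) (z^+2) = (q * w^+2 - 1)^+2 *
   (q * z^+2 * (1-q^+2*z^+4) * q^+2 * ((1-q^+2*z^+2)^-1)^+2 * (1-q^+4*z^+4)^-1 * q^-1 * (w^-1)^+2).
Proof.
move=> hq hw h1 h2; rewrite /tt /U; field.
by rewrite !exprMn h1 h2 hw ?hq.
Qed.


Lemma qqX j : qq ^+ j = tofrac ('X^j).
Proof. by rewrite /qq tofracXn. Qed.

Lemma poly1mX_neq0 j : (0 < j)%N -> (1 - 'X^j : {poly rat}) != 0.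
Proof.
case: j => // j _; apply/negP => /eqP h.
have := congr1 (horner^~ 0) h; rewrite /= hornerD hornerN hornerXn hornerC expr0n /=.
by rewrite subr0 horner0 => /eqP; rewrite oner_eq0.
Qed.

Lemma poly1pX_neq0 j : (1 + 'X^j : {poly rat}) != 0.
Proof.
apply/negP => /eqP h.
have := congr1 (horner^~ 1) h; rewrite /= hornerD hornerXn hornerC expr1n horner0 => /eqP.
by [].
Qed.

Lemma polyX_neq0 j : ('X^j : {poly rat}) != 0.
Proof. by rewrite -size_poly_eq0 size_polyXn. Qed.

Lemma nz1m j : (0 < j)%N -> 1 - qq^+j != 0.
Proof. by move=> hj; rewrite qqX -tofrac1 -rmorphB tofrac_eq0 poly1mX_neq0. Qed.

Lemma nz1p j : 1 + qq^+j != 0.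
Proof. by rewrite qqX -tofrac1 -rmorphD tofrac_eq0 poly1pX_neq0. Qed.

Lemma nzX j : qq^+j != 0.
Proof. by rewrite qqX tofrac_eq0 polyX_neq0. Qed.

Lemma nzq : qq != 0.
Proof. by have := nzX 1; rewrite expr1. Qed.

Lemma hQ2 : forall a b : nat, a != b -> (qq^+2)^+a != (qq^+2)^+b.
Proof.
move=> a b hab; rewrite -!exprM !qqX tofrac_eq.
apply/negP => /eqP e; have := congr1 (fun P : {poly rat} => size P) e.
rewrite /= !size_polyXn => -[]; lia.
Qed.

Definition fac (x : QF) n := qpoch x x n.

Lemma fac_split x k : fac x (k + k) = fac x k * qpoch (x^+k.+1) x k.
Proof.
rewrite /fac /qpoch big_split_ord /=; congr (_ * _); apply: eq_bigr => i _.
by rewrite -exprS -exprD addSn.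
Qed.

Lemma abs1 (F : fieldType) (A B C : F) : B != 0 -> A = B * C -> C / B = A / B^+2.
Proof. move=> h ->; field; exact: h. Qed.

Lemma qbin2 x k : fac x k != 0 -> qbin x (2*k) k = fac x (2*k) / fac x k ^+ 2.
Proof.
move=> h; rewrite /qbin ifT; last by lia.
rewrite (_ : (2 * k - k + 1 = k.+1)%N); last by lia.
rewrite (_ : (2 * k = k + k)%N); last by lia.
rewrite fac_split; exact: (abs1 h erefl).
Qed.

Lemma qpoch_S a x k : qpoch a x k.+1 = qpoch a x k * (1 - a * x^+k).
Proof. by rewrite /qpoch big_ord_recr. Qed.

Lemma fac_neq0 a k : (0 < a)%N -> fac (qq^+a) k != 0.
Proof.
move=> ha; elim: k => [|k IH]; first by rewrite /fac /qpoch big_ord0; exact: oner_neq0.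
rewrite /fac qpoch_S; apply: mulf_neq0; first exact: IH.
rewrite -exprM -exprD; apply: nz1m; lia.
Qed.

Lemma qpochN_neq0 a k : qpoch (- qq^+a) (qq^+a) k != 0.
Proof.
elim: k => [|k IH]; first by rewrite /qpoch big_ord0; exact: oner_neq0.
rewrite qpoch_S; apply: mulf_neq0; first exact: IH.
rewrite mulNr opprK -exprM -exprD; exact: nz1p.
Qed.

Lemma pw1 (R : pzRingType) (x : R) k : (x^+2)^+(2*k) = (x^+k)^+4.
Proof. rewrite -!exprM; congr (_ ^+ _); lia. Qed.
Lemma pw2 (R : pzRingType) (x : R) k : (x^+2)^+(2*k).+1 = x^+2 * (x^+k)^+4.
Proof. rewrite -!exprM -exprD; congr (_ ^+ _); lia. Qed.
Lemma pw3 (R : pzRingType) (x : R) k : (x^+2)^+k = (x^+k)^+2.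
Proof. rewrite -!exprM; congr (_ ^+ _); lia. Qed.
Lemma pw4 (R : pzRingType) (x : R) k : x^+(2*k).+2 = x^+2 * (x^+k)^+2.
Proof. rewrite -!exprM -exprD; congr (_ ^+ _); lia. Qed.
Lemma pw5 (R : pzRingType) (x : R) k : x^+(2*k) = (x^+k)^+2.
Proof. rewrite -!exprM; congr (_ ^+ _); lia. Qed.
Lemma pw6 (R : pzRingType) (x : R) k : x^+(2*k).+1 = x * (x^+k)^+2.
Proof. rewrite -!exprM -[X in X * _]expr1 -exprD; congr (_ ^+ _); lia. Qed.

Lemma pw7 (R : pzRingType) (x : R) k : (x^+4)^+(2 * k) = (x^+k)^+8.
Proof. rewrite -!exprM; congr (_ ^+ _); lia. Qed.
Lemma pw8 (R : pzRingType) (x : R) k : (x^+4)^+(2 * k).+1 = x^+4 * (x^+k)^+8.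
Proof. rewrite -!exprM -exprD; congr (_ ^+ _); lia. Qed.
Lemma pw9 (R : pzRingType) (x : R) k : (x^+4)^+k = (x^+k)^+4.
Proof. rewrite -!exprM; congr (_ ^+ _); lia. Qed.
Lemma pw10 (R : pzRingType) (x : R) k : (x^+2)^+(2 * k + 1) = x^+2 * (x^+k)^+4.
Proof. rewrite -!exprM -exprD; congr (_ ^+ _); lia. Qed.
Lemma pw11 (R : pzRingType) (x : R) k : (x^+2)^+(2 * k + 2) = x^+4 * (x^+k)^+4.
Proof. rewrite -!exprM -exprD; congr (_ ^+ _); lia. Qed.

Lemma qpochN1_neq0 k : qpoch (- qq) qq k != 0.
Proof. have := qpochN_neq0 1 k; by rewrite expr1. Qed.

Lemma base0 (F : fieldType) (q : F) : (1 / 1) ^+ 3 * q ^+ (2 * 0) / (1 ^+ 2 * 1 ^+ 2) = 1.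
Proof. rewrite muln0 expr0; field. by rewrite oner_neq0. Qed.

Definition orig (k : nat) := qbin (qq ^+ 2) (2 * k) k ^+ 3 * qq ^+ (2 * k)
        / (qpoch (- qq ^+ 2) (qq ^+ 2) k ^+ 2 * qpoch (- qq) qq (2 * k) ^+ 2).

Lemma orig_prod k : orig k = \prod_(i<k) U qq (qq^+i).
Proof.
elim: k => [|k IH].
  rewrite big_ord0 /orig /qbin /= /qpoch !big_ord0; exact: base0.
rewrite big_ord_recr /= -IH /orig !qbin2 ?fac_neq0 //.
have -> : (2 * k.+1 = (2*k).+2)%N by lia.
rewrite /fac !qpoch_S -/(fac _ _).
rewrite (pw1 qq) (pw2 qq) (pw3 qq) (pw4 qq) (pw5 qq) (pw6 qq).
apply: stepL.
- exact: fac_neq0.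
- exact: qpochN_neq0.
- exact: qpochN1_neq0.
- rewrite -exprM -exprD; apply: nz1m; lia.
- rewrite -exprM -exprD; apply: nz1m; lia.
- rewrite -exprM -exprD; exact: nz1p.
- rewrite -exprM -exprS; exact: nz1p.
Qed.

Lemma rhs_prod m : qbin (qq ^+ 4) (2 * m) m / qpoch (- qq ^+ 2) (qq ^+ 2) (2 * m)
  = \prod_(i<m) ((1-(qq^+2)^+(2 * i+1))/(1-(qq^+2)^+(2 * i+2))).
Proof.
elim: m => [|m IH].
  rewrite big_ord0 /qbin /= /qpoch !big_ord0; exact: base1.
rewrite big_ord_recr /= -IH !qbin2 ?fac_neq0 //.
have -> : (2 * m.+1 = (2 * m).+2)%N by lia.
rewrite /fac !qpoch_S -/(fac _ _).
rewrite (pw7 qq) (pw8 qq) (pw9 qq) (pw1 qq) (pw2 qq) (pw10 qq) (pw11 qq).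
apply: stepR.
- exact: fac_neq0.
- exact: qpochN_neq0.
- rewrite -exprM -exprD; apply: nz1m; lia.
- rewrite -exprM -exprD; exact: nz1p.
- rewrite -exprM -exprD; exact: nz1p.
Qed.


Section F.
Variable p : nat.
Hypothesis pp : prime p.
Local Notation m := (qint p).

Lemma good_qq : good m qq.
Proof. exact: good_poly. Qed.
Lemma good_one : good m 1.
Proof. rewrite -tofrac1; exact: good_poly. Qed.
Lemma good_expn x k : good m x -> good m (x^+k).
Proof.
move=> h; elim: k => [|k IH]; first by rewrite expr0; exact: good_one.
rewrite exprS; exact: good_mul.
Qed.
Lemma good_sub x y : good m x -> good m y -> good m (x - y).
Proof. by move=> hx hy; apply: good_add => //; apply: good_opp. Qed.
Lemma good_qqinv : good m qq^-1.
Proof. apply: good_inv; [exact: polyX_neq0 1 | exact: cop_X (prime_gt0 pp)]. Qed.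
Lemma good_inv1m j : (0 < j)%N -> ~~ (p %| j)%N -> good m (1 - qq^+j)^-1.
Proof.
move=> h1 h2; rewrite qqX -tofrac1 -rmorphB; apply: good_inv.
  exact: poly1mX_neq0.
exact: cop_1mX.
Qed.


Variable n : nat.
Hypothesis hpn : p = (2 * n + 1)%N.

Lemma ndvd j : (0 < j)%N -> (j < 2 * p)%N -> ~~ odd j -> ~~ (p %| j)%N.
Proof.
move=> h1 h2 h3; apply/negP => /dvdnP [t ht].
have : t = 1%N by subst; nia.
move=> t1; move: h3; rewrite ht t1 mul1n hpn oddD oddM /=; by [].
Qed.

Lemma good_qqXinv k : good m (qq^+k)^-1.
Proof. rewrite -exprVn; apply: good_expn; exact: good_qqinv. Qed.

Ltac goodt := repeat first [ assumption | exact: good_qqXinv | exact: good_one | exact: good_qq | exact: good_qqinv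
   | apply: good_mul | apply: good_sub | apply: good_expn ].

Lemma term_ok i : (i < n)%N ->
  [/\ good m (U qq (qq^+i)), good m (tt (qq^+2) ((qq^+2)^+n) ((qq^+2)^+i))
    & zero2 m 2 (U qq (qq^+i) - tt (qq^+2) ((qq^+2)^+n) ((qq^+2)^+i))].
Proof.
move=> hi.
have g1 : good m (1 - qq ^+ 2 * (qq ^+ i) ^+ 2)^-1.
  rewrite -exprM -exprD; apply: good_inv1m; first by lia.
  apply: ndvd; [lia | lia | by rewrite oddD oddM andbF].
have g2 : good m (1 - qq ^+ 4 * (qq ^+ i) ^+ 4)^-1.
  rewrite -exprM -exprD; apply: good_inv1m; first by lia.
  apply: ndvd; [lia | lia | by rewrite oddD oddM andbF].
have n1 : 1 - qq ^+ 2 * (qq ^+ i) ^+ 2 != 0 by rewrite -exprM -exprD; apply: nz1m; lia.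
have n2 : 1 - qq ^+ 4 * (qq ^+ i) ^+ 4 != 0 by rewrite -exprM -exprD; apply: nz1m; lia.
rewrite !(pw3 qq).
split.
- rewrite /U; goodt.
- rewrite ttE; [goodt | exact: nzq | exact: nzX | exact: n1 | exact: n2].
rewrite diffE; [ | exact: nzq | exact: nzX | exact: n1 | exact: n2].
rewrite mulrC; apply: zero2_mul; first by goodt.
rewrite -exprM -exprS (_ : ((n * 2).+1 = p)%N); last by lia.
rewrite qqX -tofrac1 -rmorphB -rmorphXn; apply: zero2_poly.
by rewrite qint_X1 exprMn; apply: dvdp_mull; exact: dvdpp.
Qed.

End F.

Lemma rhsA (F : fieldType) (x a b : F) k : x^+(2 * k) * a^+2 / b^+2 = (x^+2)^+k * (a/b)^+2.
Proof. rewrite -exprM expr_div_n; exact: esym (mulrA _ _ _). Qed.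

Theorem corollary2p2 (p : nat) (hp : prime p) (hodd : odd p) :
  qcongr (qint p) 2
    (\sum_(k < (p - 1) %/ 2 + 1)
        qbin (qq ^+ 2) (2 * k) k ^+ 3 * qq ^+ (2 * k)
        / (qpoch (- qq ^+ 2) (qq ^+ 2) k ^+ 2 * qpoch (- qq) qq (2 * k) ^+ 2))
    (if (p %% 4 == 1)%N then
       qq ^+ ((p - 1) %/ 2) * qbin (qq ^+ 4) ((p - 1) %/ 2) ((p - 1) %/ 4) ^+ 2
       / qpoch (- qq ^+ 2) (qq ^+ 2) ((p - 1) %/ 2) ^+ 2
     else 0).
Proof.
have h2 : (p %% 2 = 1)%N by rewrite modn2 hodd.
set n := ((p - 1) %/ 2)%N.
have hpn : p = (2 * n + 1)%N by rewrite /n; lia.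
have eR : (if (p %% 4 == 1)%N then
       qq ^+ n * qbin (qq ^+ 4) n ((p - 1) %/ 4) ^+ 2
       / qpoch (- qq ^+ 2) (qq ^+ 2) n ^+ 2
     else 0) = TT (qq^+2) n.
  case: ifP => h4.
    have e : n = (2 * ((p - 1) %/ 4))%N by move/eqP: h4; rewrite /n; lia.
    rewrite e (TT_closed hQ2 _).1 /Tc -rhs_prod; exact: rhsA.
  have e : n = (2 * (n %/ 2)).+1%N by move/negbT: h4; rewrite /n; lia.
  by rewrite e (TT_closed hQ2 _).2.
rewrite eR.
have H : zero2 (qint p) 2 (\sum_(k < n + 1) orig k - TT (qq^+2) n).
  rewrite /TT addn1 -sumrB.
  apply: (zero2_sum (f := fun k => orig k - FF (qq^+2) n k)) => i hi.
  rewrite orig_prod /FF.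
  apply: (zero2_prod (f := fun j => U qq (qq^+j)) (g := fun j => tt (qq^+2) ((qq^+2)^+n) ((qq^+2)^+j))) => j hj.
  apply: (term_ok hp hpn); lia.
exact: H.
Qed.
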